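(* Let $(X(n),V(n))_{n\ge0}$ be a global solution of the discrete Motsch–Tadmor model (as in the context, under its standing assumptions). Then for all $n\ge0$, \[ \|\Delta^x(n+1)\|_F\le\|\Delta^x(n)\|_F+h\|\Delta^v(n)\|_F,\qquad \|\Delta^v(n+1)\|_F\le\Big[1-h\kappa\big(1-\|\phi\|_{\mathrm{Lip}}N\|\Delta^x(n)\|_F\big)\Big]\|\Delta^v(n)\|_F . \]
   Context: Discrete MT model: fix $N\ge1$, $d\ge1$, $\kappa>0$, $h>0$, and $a:[0,\infty)\to\mathbb{R}$ with constants $0<c_1\le c_2$, $c_1\le a\le c_2$, and $|a(r_1)-a(r_2)|\le L_a|r_1-r_2|$ ($L_a>0$); also $0<h<\min\{1,1/\kappa\}$. A solution satisfies $x_i(n+1)=x_i(n)+hv_i(n)$, $v_i(n+1)=v_i(n)+h\kappa\sum_{j=1}^N\phi_{ij}(n)(v_j(n)-v_i(n))$, $\phi_{ij}(n)=\frac{a(\|x_i(n)-x_j(n)\|)}{\sum_{k}a(\|x_i(n)-x_k(n)\|)}$, with $x_i(n),v_i(n)\in\mathbb{R}^d$. Notation: $\|\Delta^x(n)\|_F=(\sum_{i,j}\|x_i(n)-x_j(n)\|^2)^{1/2}$, $\|\Delta^v(n)\|_F=(\sum_{i,j}\|v_i(n)-v_j(n)\|^2)^{1/2}$, $\|\phi\|_{\mathrm{Lip}}=\frac{L_a}{Nc_1}(1+\frac{c_2}{c_1})$. *)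

(* Defs.v *)
From mathcomp Require Import all_boot all_order all_algebra.
From mathcomp Require Import reals.
Set Implicit Arguments. Unset Strict Implicit. Unset Printing Implicit Defensive.
Import Order.TTheory GRing.Theory Num.Theory.
Local Open Scope ring_scope.

Definition enorm (R : realType) (d : nat) (u : 'rV[R]_d) : R :=
  Num.sqrt (\sum_(k < d) u ord0 k ^+ 2).

Definition mt_phi (R : realType) (N d : nat) (a : R -> R)
    (X : 'I_N -> 'rV[R]_d) (i j : 'I_N) : R :=
  a (enorm (X i - X j)) / \sum_(k < N) a (enorm (X i - X k)).

Definition is_MT_solution (R : realType) (N d : nat) (kappa h : R) (a : R -> R)
    (X V : nat -> 'I_N -> 'rV[R]_d) : Prop :=
  forall (n : nat) (i : 'I_N),
    X n.+1 i = X n i + h *: V n i /\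
    V n.+1 i = V n i + (h * kappa) *: \sum_(j < N) mt_phi a (X n) i j *: (V n j - V n i).

(* Frobenius norm of the relative-state matrix (||Delta^x||_F, ||Delta^v||_F) *)
Definition DeltaF (R : realType) (N d : nat) (Y : 'I_N -> 'rV[R]_d) : R :=
  Num.sqrt (\sum_(i < N) \sum_(j < N) enorm (Y i - Y j) ^+ 2).

Definition phi_Lip (R : realType) (N : nat) (La c1 c2 : R) : R :=
  La / (N%:R * c1) * (1 + c2 / c1).

(* Main.v *)
Require Import Defs.
From mathcomp Require Import all_boot all_order all_algebra.
From mathcomp Require Import reals ring lra.
Import Order.TTheory GRing.Theory Num.Theory.
Local Open Scope ring_scope.

Section L2.
Variable R : realType.
Set Implicit Arguments.

Definition l2 {T : finType} (f : T -> R) := Num.sqrt (\sum_t f t ^+ 2).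

Lemma l2_ge0 {T : finType} (f : T -> R) : 0 <= l2 f.
Proof. exact: sqrtr_ge0. Qed.

Lemma sumsq_ge0 {T : finType} (f : T -> R) : 0 <= \sum_t f t ^+ 2.
Proof. by apply: sumr_ge0 => t _; rewrite sqr_ge0. Qed.

Lemma l2_sq {T : finType} (f : T -> R) : l2 f ^+ 2 = \sum_t f t ^+ 2.
Proof. by rewrite sqr_sqrtr // sumsq_ge0. Qed.

Lemma lagrange {T : finType} (f g : T -> R) :
  \sum_i \sum_j (f i * g j - f j * g i) ^+ 2 =
  2 * ((\sum_i f i ^+ 2) * (\sum_j g j ^+ 2) - (\sum_i f i * g i) ^+ 2).
Proof.
have S1 : forall (u v : T -> R), \sum_i \sum_j u i * v j = (\sum_i u i) * (\sum_j v j).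
  by move=> u v; rewrite mulr_suml; apply: eq_bigr => i _; rewrite mulr_sumr.
transitivity (\sum_i \sum_j (f i ^+ 2 * g j ^+ 2) + \sum_i \sum_j (g i ^+ 2 * f j ^+ 2)
   - 2 * \sum_i \sum_j ((f i * g i) * (f j * g j))).
  rewrite mulr_sumr -big_split -sumrB /=; apply: eq_bigr => i _.
  rewrite mulr_sumr -big_split -sumrB; apply: eq_bigr => j _ /=; ring.
rewrite !S1 expr2; ring.
Qed.

Lemma cs {T : finType} (f g : T -> R) : \sum_i f i * g i <= l2 f * l2 g.
Proof.
rewrite /l2 -sqrtrM ?sumsq_ge0 //.
apply: (le_trans (ler_norm _)).
rewrite -sqrtr_sqr ler_sqrt; last by rewrite mulr_ge0 ?sumsq_ge0.
have H := lagrange f g.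
have : 0 <= \sum_i \sum_j (f i * g j - f j * g i) ^+ 2.
  by apply: sumr_ge0 => i _; apply: sumsq_ge0.
rewrite H pmulr_rge0 // subr_ge0 => //.
Qed.

Lemma l2_triangle {T : finType} (f g : T -> R) :
  l2 (fun t => f t + g t) <= l2 f + l2 g.
Proof.
rewrite -(ger0_norm (addr_ge0 (l2_ge0 f) (l2_ge0 g))) -sqrtr_sqr ler_sqrt ?sqr_ge0 //.
have -> : \sum_t (f t + g t) ^+ 2 = \sum_t f t ^+ 2 + 2 * \sum_t f t * g t + \sum_t g t ^+ 2.
  rewrite mulr_sumr -!big_split /=; apply: eq_bigr => t _; ring.
rewrite sqrrD !l2_sq lerD2r lerD2l; have := cs f g; lra.
Qed.

Lemma l2_mono {T : finType} (f g : T -> R) :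
  (forall t, `|f t| <= g t) -> l2 f <= l2 g.
Proof.
move=> H; rewrite /l2 ler_sqrt ?sumsq_ge0 //; apply: ler_sum => t _.
rewrite -real_normK ?num_real // [X in _ <= X]expr2 expr2.
apply: ler_pM => //; exact: (le_trans (normr_ge0 _) (H t)).
Qed.

Lemma l2_scale {T : finType} (c : R) (f : T -> R) :
  l2 (fun t => c * f t) = `|c| * l2 f.
Proof.
rewrite /l2 -sqrtr_sqr -sqrtrM ?sqr_ge0 //; congr Num.sqrt.
by rewrite mulr_sumr; apply: eq_bigr => t _; rewrite exprMn.
Qed.

End L2.
Arguments l2 {R T}.
Section EN.
Variable R : realType.
Variable d : nat.
Implicit Types u v : 'rV[R]_d.

Lemma l2_ext {T : finType} (f g : T -> R) : (forall t, f t = g t) -> l2 f = l2 g.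
Proof. by move=> H; rewrite /l2; congr Num.sqrt; apply: eq_bigr => t _; rewrite H. Qed.

Lemma enormE u : enorm u = l2 (fun k => u ord0 k).
Proof. by []. Qed.

Lemma enorm_ge0 u : 0 <= enorm u.
Proof. exact: sqrtr_ge0. Qed.

Lemma enormD u v : enorm (u + v) <= enorm u + enorm v.
Proof.
have -> : enorm (u + v) = l2 (fun k => u ord0 k + v ord0 k) by apply: l2_ext => k; rewrite mxE.
exact: l2_triangle.
Qed.

Lemma enormZ (c : R) u : enorm (c *: u) = `|c| * enorm u.
Proof.
have -> : enorm (c *: u) = l2 (fun k => c * u ord0 k) by apply: l2_ext => k; rewrite mxE.
exact: l2_scale.
Qed.

Lemma enormN u : enorm (- u) = enorm u.
Proof. by rewrite -scaleN1r enormZ normrN normr1 mul1r. Qed.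

Lemma enormB u v : enorm (u - v) = enorm (v - u).
Proof. by rewrite -enormN opprB. Qed.

Lemma enorm0 : enorm (0 : 'rV[R]_d) = 0.
Proof. by rewrite -(scale0r 0) enormZ normr0 mul0r. Qed.

Lemma enorm_sum {I : finType} (F : I -> 'rV[R]_d) :
  enorm (\sum_i F i) <= \sum_i enorm (F i).
Proof.
apply: (big_ind2 (fun x y => enorm x <= y)); first by rewrite enorm0.
  by move=> x1 x2 y1 y2 H1 H2; apply: (le_trans (enormD _ _)); apply: lerD.
by [].
Qed.

Lemma enorm_rev u v : `|enorm u - enorm v| <= enorm (u - v).
Proof.
have h1 := enormD (v - u) u; rewrite subrK enormB in h1.
have h2 := enormD (u - v) v; rewrite subrK in h2.
apply/ler_normlP; split; lra.
Qed.

End EN.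
Arguments enorm_ge0 {R d}.
Arguments enormB {R d}.
Arguments enorm_rev {R d}.

Lemma div_le (R : realType) (x x' y y' : R) :
  0 <= x -> x <= x' -> 0 < y' -> y' <= y -> x / y <= x' / y'.
Proof.
move=> x0 xx y0 yy; have y0' : 0 < y by apply: lt_le_trans yy.
apply: ler_pM => //; first by rewrite invr_ge0 ltW.
by rewrite lef_pV2 // posrE.
Qed.

Lemma div_diff (R : realType) (A B S T : R) : S != 0 -> T != 0 ->
  A / S - B / T = (A - B) / S + B * (T - S) / (S * T).
Proof. by move=> hS hT; field; rewrite hS hT. Qed.

Section MT.
Variables (R : realType) (N d : nat) (c1 c2 La : R) (a : R -> R).
Hypotheses (hN : (1 <= N)%N) (hc1 : 0 < c1) (hc12 : c1 <= c2)
  (ha : forall r, 0 <= r -> c1 <= a r /\ a r <= c2) (hLa : 0 < La)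
  (hLip : forall r1 r2, 0 <= r1 -> 0 <= r2 -> `|a r1 - a r2| <= La * `|r1 - r2|).

Definition Ssum (X : 'I_N -> 'rV[R]_d) i := \sum_(k < N) a (enorm (X i - X k)).

Lemma Nc1_pos : 0 < N%:R * c1 :> R.
Proof. by rewrite mulr_gt0 // ltr0n. Qed.

Lemma Ssum_ge X i : N%:R * c1 <= Ssum X i.
Proof.
have -> : N%:R * c1 = \sum_(k < N) c1 by rewrite sumr_const card_ord mulr_natl.
by apply: ler_sum => k _; case: (ha _ (enorm_ge0 (X i - X k))).
Qed.

Lemma Ssum_pos X i : 0 < Ssum X i.
Proof. exact: lt_le_trans Nc1_pos (Ssum_ge X i). Qed.

Lemma a_lip (X : 'I_N -> 'rV[R]_d) i k m :
  `|a (enorm (X i - X m)) - a (enorm (X k - X m))| <= La * enorm (X i - X k).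
Proof.
apply: (le_trans (hLip _ _ (enorm_ge0 _) (enorm_ge0 _))).
rewrite ler_pM2l //; apply: (le_trans (enorm_rev _ _)).
by rewrite opprB addrA subrK.
Qed.

Lemma Ssum_lip X i k : `|Ssum X i - Ssum X k| <= N%:R * La * enorm (X i - X k).
Proof.
rewrite /Ssum -sumrB; apply: (le_trans (ler_norm_sum _ _ _)).
have -> : N%:R * La * enorm (X i - X k) = \sum_(m < N) La * enorm (X i - X k).
  by rewrite sumr_const card_ord -mulr_natl; ring.
by apply: ler_sum => m _; apply: a_lip.
Qed.

Lemma phi_sum1 (X : 'I_N -> 'rV[R]_d) i : \sum_(j < N) mt_phi a X i j = 1.
Proof.
rewrite /mt_phi -mulr_suml divff //; exact: lt0r_neq0 (Ssum_pos X i).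
Qed.

Lemma phi_lip (X : 'I_N -> 'rV[R]_d) i k j :
  `|mt_phi a X i j - mt_phi a X k j| <= phi_Lip N La c1 c2 * enorm (X i - X k).
Proof.
rewrite /mt_phi -/(Ssum X i) -/(Ssum X k).
set A := a _; set B := a _; set S := Ssum X i; set T := Ssum X k.
set del := enorm (X i - X k).
have S0 := Ssum_pos X i; have T0 := Ssum_pos X k.
have SN := Ssum_ge X i; have TN := Ssum_ge X k.
have hB : 0 <= B <= c2.
  case: (ha _ (enorm_ge0 (X k - X j))) => h1 h2; rewrite h2 andbT; exact: le_trans (ltW hc1) h1.
case/andP: hB => B0 B2.
have hAB : `|A - B| <= La * del by apply: a_lip.
have hTS : `|T - S| <= N%:R * La * del by rewrite distrC; apply: Ssum_lip.
rewrite (@div_diff R A B S T (lt0r_neq0 S0) (lt0r_neq0 T0)).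
apply: (le_trans (ler_normD _ _)).
have d0 : 0 <= del by apply: enorm_ge0.
have e1 : `|(A - B) / S| <= La * del / (N%:R * c1).
  rewrite normrM normfV (gtr0_norm S0); apply: div_le => //; exact: Nc1_pos.
have e2 : `|B * (T - S) / (S * T)| <= c2 * (N%:R * La * del) / (N%:R * c1 * (N%:R * c1)).
  rewrite normrM normfV normrM (ger0_norm B0) (gtr0_norm (mulr_gt0 S0 T0)).
  apply: div_le.
  - by rewrite mulr_ge0.
  - by apply: ler_pM.
  - by rewrite mulr_gt0 // Nc1_pos.
  - by apply: ler_pM => //; apply: ltW; exact: Nc1_pos.
apply: (le_trans (lerD e1 e2)); rewrite le_eqVlt; apply/orP; left; apply/eqP.
rewrite /phi_Lip; field.
apply/andP; split; first by rewrite lt0r_neq0.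
rewrite pnatr_eq0; by case: N hN.
Qed.

End MT.
Arguments l2_mono {R T}.
Arguments l2_triangle {R T}.
Arguments l2_scale {R T}.
Arguments cs {R T}.
Arguments enormZ {R d}.
Arguments enormD {R d}.

Lemma vec_id (R : realType) d (vi vk Wi Wk : 'rV[R]_d) (c : R) :
  vi + c *: Wi - (vk + c *: (Wk + (vi - vk))) = (1 - c) *: (vi - vk) + c *: (Wi - Wk).
Proof. apply/rowP => k; rewrite !mxE; ring. Qed.

Lemma vec_id2 (R : realType) d (xi xj vi vj : 'rV[R]_d) (h : R) :
  xi + h *: vi - (xj + h *: vj) = (xi - xj) + h *: (vi - vj).
Proof. apply/rowP => k; rewrite !mxE; ring. Qed.

Lemma DeltaF_l2 (R : realType) N d (Y : 'I_N -> 'rV[R]_d) :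
  DeltaF Y = l2 (fun p : 'I_N * 'I_N => enorm (Y p.1 - Y p.2)).
Proof. by rewrite /DeltaF /l2 pair_big. Qed.

Lemma eqle (R : realType) (x y : R) : x = y -> x <= y.
Proof. by move->. Qed.

Section MT2.
Variables (R : realType) (N d : nat) (c1 c2 La : R) (a : R -> R).
Hypotheses (hN : (1 <= N)%N) (hc1 : 0 < c1) (hc12 : c1 <= c2)
  (ha : forall r, 0 <= r -> c1 <= a r /\ a r <= c2) (hLa : 0 < La)
  (hLip : forall r1 r2, 0 <= r1 -> 0 <= r2 -> `|a r1 - a r2| <= La * `|r1 - r2|).

Lemma v_step (Xn Vn : 'I_N -> 'rV[R]_d) (c : R) (c0 : 0 <= c) (c1' : c <= 1)
   (Vi Vk : 'rV[R]_d) i k :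
  Vi = Vn i + c *: \sum_j mt_phi a Xn i j *: (Vn j - Vn i) ->
  Vk = Vn k + c *: \sum_j mt_phi a Xn k j *: (Vn j - Vn k) ->
  enorm (Vi - Vk) <= (1 - c) * enorm (Vn i - Vn k)
     + c * (phi_Lip N La c1 c2 * enorm (Xn i - Xn k) * \sum_j enorm (Vn i - Vn j)).
Proof.
move=> -> ->.
have -> : \sum_j mt_phi a Xn k j *: (Vn j - Vn k)
    = \sum_j mt_phi a Xn k j *: (Vn j - Vn i) + (Vn i - Vn k).
  have E : forall j, Vn j - Vn k = (Vn j - Vn i) + (Vn i - Vn k).
    by move=> j; rewrite addrA subrK.
  under eq_bigr do rewrite E scalerDr.
  by rewrite big_split /= -scaler_suml (phi_sum1 _ _ _ _ hN hc1 ha) scale1r.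
rewrite vec_id -sumrB.
apply: (le_trans (enormD _ _)); rewrite !enormZ (ger0_norm c0) ger0_norm ?subr_ge0 //.
apply: lerD => //; apply: ler_wpM2l => //.
apply: le_trans; first exact: enorm_sum.
rewrite mulr_sumr; apply: ler_sum => j _.
rewrite -scalerBl enormZ (enormB (Vn j)); apply: ler_wpM2r; first exact: enorm_ge0.
exact: (phi_lip _ _ _ _ _ hN hc1 ha hLa hLip).
Qed.

End MT2.

Theorem proposition3p3 (R : realType) (N d : nat) (kappa h c1 c2 La : R)
    (a : R -> R) (X V : nat -> 'I_N -> 'rV[R]_d) :
  (1 <= N)%N -> (1 <= d)%N -> 0 < kappa -> 0 < h ->
  0 < c1 -> c1 <= c2 ->
  (forall r, 0 <= r -> c1 <= a r /\ a r <= c2) ->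
  0 < La ->
  (forall r1 r2, 0 <= r1 -> 0 <= r2 -> `|a r1 - a r2| <= La * `|r1 - r2|) ->
  h < 1 -> h < 1 / kappa ->
  is_MT_solution kappa h a X V ->
  forall n : nat,
    DeltaF (X n.+1) <= DeltaF (X n) + h * DeltaF (V n) /\
    DeltaF (V n.+1) <=
      (1 - h * kappa * (1 - phi_Lip N La c1 c2 * N%:R * DeltaF (X n))) * DeltaF (V n).
Proof.
move=> hN hd hk hh hc1 hc12 ha hLa hLip h1 hk1 sol n.
split.
  rewrite !DeltaF_l2.
  apply: (le_trans (l2_mono _ (fun p : 'I_N * 'I_N => enorm (X n p.1 - X n p.2)
           + h * enorm (V n p.1 - V n p.2)) _)).
    move=> [i j] /=; rewrite ger0_norm ?enorm_ge0 //.
    have [E1 _] := sol n i; have [E2 _] := sol n j.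
    rewrite E1 E2 vec_id2; apply: (le_trans (enormD _ _)).
    by rewrite enormZ (gtr0_norm hh).
  apply: (le_trans (l2_triangle _ _)).
  by rewrite l2_scale (gtr0_norm hh).
set c := h * kappa.
have c0 : 0 <= c by rewrite mulr_ge0 // ltW.
have c1' : c <= 1 by apply: ltW; rewrite /c -ltr_pdivlMr // div1r; rewrite div1r in hk1.
set L := phi_Lip N La c1 c2.
have L0 : 0 <= L.
  have c20 : 0 < c2 by exact: lt_le_trans hc1 hc12.
  rewrite /L /phi_Lip; apply: mulr_ge0.
    by apply: divr_ge0; [exact: ltW | rewrite mulr_ge0 ?ler0n ?ltW].
  by apply: addr_ge0 => //; apply: divr_ge0; apply: ltW.
set DV := DeltaF (V n); set DX := DeltaF (X n).
have DV0 : 0 <= DV by apply: sqrtr_ge0.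
have DX0 : 0 <= DX by apply: sqrtr_ge0.
set Sv := fun i => \sum_j enorm (V n i - V n j).
have Sv_le : forall i, Sv i <= Num.sqrt N%:R * DV.
  move=> i; have := cs (fun _ : 'I_N => 1) (fun j => enorm (V n i - V n j)).
  under eq_bigr do rewrite mul1r.
  move=> H; apply: (le_trans H); apply: ler_pM; rewrite ?l2_ge0 //.
    apply: eqle; rewrite /l2; congr Num.sqrt.
    by under eq_bigr do rewrite expr1n; rewrite sumr_const card_ord.
  rewrite /l2 /DV /DeltaF ler_sqrt; last by apply: sumr_ge0 => ? _; apply: sumsq_ge0.
  rewrite [X in _ <= X](bigD1 i) //= lerDl; apply: sumr_ge0 => ? _; apply: sumsq_ge0.
have sqN : Num.sqrt (N%:R : R) <= N%:R.
  have N1 : (1 : R) <= N%:R by rewrite ler1n.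
  rewrite -[X in _ <= X](@ger0_norm _ (N%:R : R)) ?ler0n // -sqrtr_sqr ler_sqrt ?sqr_ge0 //.
  nra.
rewrite DeltaF_l2.
apply: (le_trans (l2_mono _ (fun p : 'I_N * 'I_N =>
   (1 - c) * enorm (V n p.1 - V n p.2) + c * (L * enorm (X n p.1 - X n p.2) * Sv p.1)) _)).
  move=> [i k] /=; rewrite ger0_norm ?enorm_ge0 //.
  have [_ E1] := sol n i; have [_ E2] := sol n k.
  exact: (v_step _ _ _ _ hN hc1 ha hLa hLip _ _ c0 c1' _ _ E1 E2).
apply: (le_trans (l2_triangle _ _)).
rewrite !l2_scale (ger0_norm c0) ger0_norm ?subr_ge0 // -DeltaF_l2 -/DV.
have H2 : l2 (fun p : 'I_N * 'I_N => L * enorm (X n p.1 - X n p.2) * Sv p.1)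
          <= L * (N%:R * DV) * DX.
  apply: (le_trans (l2_mono _ (fun p : 'I_N * 'I_N =>
        (L * (Num.sqrt N%:R * DV)) * enorm (X n p.1 - X n p.2)) _)).
    move=> [i k] /=.
    have Sv0 : 0 <= Sv i by apply: sumr_ge0 => ? _; apply: enorm_ge0.
    rewrite ger0_norm; last by apply: mulr_ge0; [apply: mulr_ge0 =>//; apply: enorm_ge0 | exact: Sv0].
    have -> : L * enorm (X n i - X n k) * Sv i = (L * Sv i) * enorm (X n i - X n k) by ring.
    apply: ler_wpM2r; first exact: enorm_ge0.
    by apply: ler_wpM2l.
  rewrite l2_scale -DeltaF_l2 -/DX ger0_norm; last by apply: mulr_ge0 => //; apply: mulr_ge0 => //; apply: sqrtr_ge0.
  apply: ler_wpM2r => //; apply: ler_wpM2l => //; apply: ler_wpM2r => //.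
have -> : (1 - c * (1 - L * N%:R * DX)) * DV = (1 - c) * DV + c * (L * (N%:R * DV) * DX)
  by ring.
by apply: lerD => //; apply: ler_wpM2l.
Qed.
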